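(* Let $d\in\mathbb N$ and $\gamma\in\mathbb R$, and consider the planar system $$\dot Y_1=Y_2-dY_1Y_2,\qquad \dot Y_2=-Y_1-Y_2^2-\gamma Y_2^2 .$$ Then $Y_2$ satisfies the Liénard equation $\ddot Y_2+(2(1-\gamma)+d)\,Y_2\dot Y_2+Y_2+d(1-\gamma)Y_2^3=0$, and the origin is an isochronous center if and only if $(2(1-\gamma)+d)^2=9d(1-\gamma)$, i.e. if and only if $\gamma=1-d$ or $\gamma=1-\frac d4$. In particular, for $\gamma=0$ (the system of characteristics of radially symmetric non-relativistic cold plasma oscillations in $\mathbb R^d$, $\dot x=xY_2$, $\dot Y_1=Y_2-dY_1Y_2$, $\dot Y_2=-Y_1-Y_2^2$), the oscillations are isochronous if and only if $d=1$ or $d=4$. Correspondingly, adding the force term $\mathbf F(\mathbf V,r)=\gamma\,|\mathbf V|^2/r$ with $\gamma\in\{1-d,\,1-\frac d4\}$ to the right-hand side of the momentum equation of the radially symmetric Euler–Poisson system makes the radial oscillations isochronous in dimension $d$.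
   Context: The radially symmetric repulsive Euler–Poisson system with constant background $c=1$, $\mathbf v_t+(\mathbf v\cdot\nabla)\mathbf v=-\nabla\Psi$, $\rho_t+\mathrm{div}(\rho\mathbf v)=0$, $\Delta\Psi=1-\rho$, with $\mathbf v=F(t,r)\mathbf r$, $\nabla\Psi=G(t,r)\mathbf r$, $r=|\mathbf r|$, reduces to $G_t+FrG_r=F-dFG$, $F_t+FrF_r=-F^2-G$; here $Y_1=G$, $Y_2=F$ along characteristics $\dot r=rF$. Adding a force $\mathbf F(\mathbf V,r)$ to the momentum equation adds $-L$ with $L=\frac1r\mathbf F$ to the equation for $\dot Y_2$ (sign conventions as in the system displayed in the claim). An isochronous center is a center of a planar ODE at which all nearby periodic orbits have the same period. *)

(* Defs.v *)
From Stdlib Require Import Reals.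
From Coquelicot Require Import Coquelicot.
Open Scope R_scope.

Definition is_solution (f g : R -> R -> R) (Y1 Y2 : R -> R) : Prop :=
  forall t : R, is_derive Y1 t (f (Y1 t) (Y2 t)) /\ is_derive Y2 t (g (Y1 t) (Y2 t)).

Definition has_min_period (Y1 Y2 : R -> R) (T : R) : Prop :=
  0 < T /\
  (forall t : R, Y1 (t + T) = Y1 t /\ Y2 (t + T) = Y2 t) /\
  (forall s : R, 0 < s < T -> exists t : R, Y1 (t + s) <> Y1 t \/ Y2 (t + s) <> Y2 t).

Definition is_center (f g : R -> R -> R) : Prop :=
  f 0 0 = 0 /\ g 0 0 = 0 /\
  exists delta : R, 0 < delta /\
    forall p1 p2 : R, 0 < p1 ^ 2 + p2 ^ 2 < delta ^ 2 ->
      exists (Y1 Y2 : R -> R) (T : R),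
        is_solution f g Y1 Y2 /\ Y1 0 = p1 /\ Y2 0 = p2 /\ has_min_period Y1 Y2 T.

Definition is_isochronous_center (f g : R -> R -> R) : Prop :=
  f 0 0 = 0 /\ g 0 0 = 0 /\
  exists delta : R, 0 < delta /\
  exists T : R,
    forall p1 p2 : R, 0 < p1 ^ 2 + p2 ^ 2 < delta ^ 2 ->
      exists Y1 Y2 : R -> R,
        is_solution f g Y1 Y2 /\ Y1 0 = p1 /\ Y2 0 = p2 /\ has_min_period Y1 Y2 T.

Definition EP1 (d : nat) (y1 y2 : R) : R := y2 - INR d * y1 * y2.
Definition EP2 (gamma : R) (y1 y2 : R) : R := - y1 - y2 ^ 2 + gamma * y2 ^ 2.

(* Main.v *)
Require Import Defs.
From Stdlib Require Import Reals Lra Psatz.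
From Coquelicot Require Import Coquelicot.
Open Scope R_scope.

Lemma EP2_eq gamma y1 y2 : EP2 gamma y1 y2 = - y1 - (1 - gamma) * y2 ^ 2.
Proof. unfold EP2. ring. Qed.

Lemma lienard (d : nat) (gamma a b : R) (Y1 Y2 : R -> R) :
  (forall t : R, a < t < b ->
     is_derive Y1 t (EP1 d (Y1 t) (Y2 t)) /\ is_derive Y2 t (EP2 gamma (Y1 t) (Y2 t))) ->
  forall t : R, a < t < b ->
    ex_derive (Derive Y2) t /\
    Derive (Derive Y2) t + (2 * (1 - gamma) + INR d) * Y2 t * Derive Y2 t
      + Y2 t + INR d * (1 - gamma) * Y2 t ^ 3 = 0.
Proof.
  intros H t Ht.
  assert (Hloc : locally t (fun s => a < s < b)).
  { apply (open_and _ _ (open_gt a) (open_lt b)). exact Ht. }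
  assert (Heq : locally t (fun s => EP2 gamma (Y1 s) (Y2 s) = Derive Y2 s)).
  { apply (filter_imp (fun s => a < s < b)); [| exact Hloc].
    intros s Hs. symmetry. apply is_derive_unique. apply H; exact Hs. }
  destruct (H t Ht) as [H1 H2].
  assert (Hd : is_derive (fun s => EP2 gamma (Y1 s) (Y2 s)) t
     (- EP1 d (Y1 t) (Y2 t) - (1 - gamma) * 2 * Y2 t * EP2 gamma (Y1 t) (Y2 t))).
  { unfold EP2 at 1. auto_derive.
    - repeat split; eexists; eassumption.
    - replace (Derive (fun x => Y1 x) t) with (EP1 d (Y1 t) (Y2 t))
        by (symmetry; now apply is_derive_unique).
      replace (Derive (fun x => Y2 x) t) with (EP2 gamma (Y1 t) (Y2 t))
        by (symmetry; now apply is_derive_unique).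
      ring. }
  pose proof (is_derive_ext_loc _ _ _ _ Heq Hd) as Hd2.
  split. { eexists; exact Hd2. }
  rewrite (is_derive_unique _ _ _ Hd2).
  rewrite (is_derive_unique _ _ _ H2).
  unfold EP1. rewrite !EP2_eq. ring.
Qed.

Lemma deriv_nonpos_le (f df : R -> R) (a b : R) : a <= b ->
  (forall x, a <= x <= b -> is_derive f x (df x)) ->
  (forall x, a <= x <= b -> df x <= 0) -> f b <= f a.
Proof.
  intros Hab Hd Hneg.
  destruct (MVT_gen f a b df) as [c [Hc Heq]].
  - intros x Hx. apply Hd. rewrite Rmin_left in Hx by lra. rewrite Rmax_right in Hx by lra. lra.
  - intros x Hx. rewrite Rmin_left in Hx by lra. rewrite Rmax_right in Hx by lra.
    apply continuity_pt_filterlim. apply (ex_derive_continuous (K:=R_AbsRing) (V:=R_NormedModule)). eexists. apply Hd. lra.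
  - rewrite Rmin_left in Hc by lra. rewrite Rmax_right in Hc by lra.
    assert (df c * (b - a) <= 0). { apply Rmult_le_0_r; [apply Hneg; lra | lra]. } lra.
Qed.

Lemma deriv_zero_eq (f : R -> R) (a b : R) : a <= b ->
  (forall x, a <= x <= b -> is_derive f x 0) -> f b = f a.
Proof.
  intros Hab Hd.
  assert (H1 := deriv_nonpos_le f (fun _ => 0) a b Hab Hd (fun _ _ => Rle_refl 0)).
  assert (H2 := deriv_nonpos_le (fun x => - f x) (fun _ => 0) a b Hab).
  assert (- f b <= - f a). { apply H2; [|intros; lra]. intros x Hx.
    replace 0 with (- 0) by ring. apply (is_derive_opp f x 0). now apply Hd. }
  lra.
Qed.

Lemma S_deriv_bound (dd c y1 y2 : R) : 0 <= dd ->
  Rabs (2 * y1 * (y2 - dd * y1 * y2) + 2 * y2 * (- y1 - c * y2 ^ 2))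
  <= (dd + Rabs c) * (y1^2 + y2^2) * (1 + (y1^2 + y2^2)).
Proof.
  intros Hd.
  replace (2 * y1 * (y2 - dd * y1 * y2) + 2 * y2 * (- y1 - c * y2 ^ 2))
    with ((2 * y2) * - (dd * y1^2 + c * y2^2)) by ring.
  rewrite Rabs_mult, Rabs_Ropp.
  assert (HP : Rabs (dd * y1^2 + c * y2^2) <= (dd + Rabs c) * (y1^2 + y2^2)).
  { eapply Rle_trans. apply Rabs_triang. rewrite !Rabs_mult.
    rewrite (Rabs_pos_eq dd Hd). rewrite (Rabs_pos_eq (y1^2)) by nra.
    rewrite (Rabs_pos_eq (y2^2)) by nra. assert (0 <= Rabs c) by apply Rabs_pos. nra. }
  assert (HY : Rabs (2 * y2) <= 1 + (y1^2 + y2^2)).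
  { rewrite Rabs_mult, (Rabs_pos_eq 2) by lra. destruct (Rcase_abs y2).
    - rewrite Rabs_left by lra. pose proof (pow2_ge_0 (y2+1)); pose proof (pow2_ge_0 y1); nra.
    - rewrite Rabs_right by lra. pose proof (pow2_ge_0 (y2-1)); pose proof (pow2_ge_0 y1); nra. }
  assert (0 <= Rabs (dd * y1 ^ 2 + c * y2 ^ 2)) by apply Rabs_pos.
  assert (0 <= Rabs (2 * y2)) by apply Rabs_pos.
  assert (0 <= (dd + Rabs c) * (y1 ^ 2 + y2 ^ 2)).
  { assert (0 <= Rabs c) by apply Rabs_pos. nra. }
  rewrite Rmult_comm. 
  replace ((dd + Rabs c) * (y1 ^ 2 + y2 ^ 2) * (1 + (y1 ^ 2 + y2 ^ 2)))
   with (((dd + Rabs c) * (y1 ^ 2 + y2 ^ 2)) * (1 + (y1 ^ 2 + y2 ^ 2))) by ring.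
  apply Rmult_le_compat; auto.
Qed.

Section Gr.
Variables (d : nat) (gamma : R) (Y1 Y2 : R -> R).
Hypothesis Hs : is_solution (EP1 d) (EP2 gamma) Y1 Y2.

Definition SS t := Y1 t ^ 2 + Y2 t ^ 2.
Definition hh t := SS t / (1 + SS t).
Definition KK := INR d + Rabs (1 - gamma).
Definition Sp t := 2 * Y1 t * (Y2 t - INR d * Y1 t * Y2 t) + 2 * Y2 t * (- Y1 t - (1-gamma) * Y2 t ^ 2).

Lemma SS_nonneg t : 0 <= SS t.
Proof. unfold SS. nra. Qed.

Lemma hh_deriv t : is_derive hh t (Sp t / (1 + SS t) ^ 2).
Proof.
  destruct (Hs t) as [H1 H2].
  pose proof (SS_nonneg t).
  unfold hh, SS. auto_derive.
  - repeat split; try (eexists; eassumption). unfold SS in H. lra.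
  - replace (Derive (fun x => Y1 x) t) with (EP1 d (Y1 t) (Y2 t))
      by (symmetry; now apply is_derive_unique).
    replace (Derive (fun x => Y2 x) t) with (EP2 gamma (Y1 t) (Y2 t))
      by (symmetry; now apply is_derive_unique).
    unfold Sp, EP1, EP2. unfold SS in H. field. lra.
Qed.

Lemma hh_bound t : Rabs (Sp t / (1 + SS t) ^ 2) <= KK * hh t.
Proof.
  pose proof (SS_nonneg t).
  assert (Hb := S_deriv_bound (INR d) (1-gamma) (Y1 t) (Y2 t) (pos_INR d)).
  fold (SS t) in Hb. 
  unfold Rdiv. rewrite Rabs_mult. rewrite (Rabs_pos_eq (/ _)).
  2:{ apply Rlt_le, Rinv_0_lt_compat. nra. }
  unfold Sp. 
  apply (Rmult_le_reg_r ((1 + SS t)^2)). nra.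
  unfold hh, KK. field_simplify. 2: lra. 2: lra.
  unfold SS in *. 
  replace (Rabs (2 * Y1 t * (Y2 t - INR d * Y1 t * Y2 t) + 2 * Y2 t * (- Y1 t - (1 - gamma) * Y2 t ^ 2)))
   with (Rabs (2 * Y1 t * (Y2 t - INR d * Y1 t * Y2 t) + 2 * Y2 t * (- Y1 t - (1 - gamma) * Y2 t ^ 2))) by reflexivity.
  lra.
Qed.

Lemma gron_up t : 0 <= t -> hh t <= hh 0 * exp (KK * t).
Proof.
  intros Ht.
  assert (H := deriv_nonpos_le (fun x => hh x * exp (- (KK * x)))
     (fun x => (Sp x / (1 + SS x) ^ 2 - KK * hh x) * exp (- (KK * x))) 0 t Ht).
  assert (Hle : hh t * exp (- (KK * t)) <= hh 0 * exp (- (KK * 0))).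
  { apply H.
    - intros x _. apply (is_derive_ext (fun x => hh x * exp (- (KK * x)))). reflexivity.
      eapply is_derive_ext. intros; reflexivity.
      replace ((Sp x / (1 + SS x) ^ 2 - KK * hh x) * exp (- (KK * x)))
        with ((Sp x / (1 + SS x) ^ 2) * exp (- (KK * x)) + hh x * (exp (- (KK * x)) * (- KK))) by ring.
      apply (is_derive_mult hh (fun x => exp (- (KK * x)))).
      + apply hh_deriv.
      + auto_derive; auto. ring.
      + intros; apply Rmult_comm.
    - intros x _. pose proof (hh_bound x). pose proof (Rle_abs (Sp x / (1 + SS x) ^ 2)).
      pose proof (exp_pos (- (KK * x))). nra. }
  replace (- (KK * 0)) with 0 in Hle by ring. rewrite exp_0 in Hle.
  pose proof (exp_pos (KK * t)).
  replace (hh t) with (hh t * exp (- (KK * t)) * exp (KK * t)).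
  2:{ rewrite Rmult_assoc, <- exp_plus. replace (- (KK * t) + KK * t) with 0 by ring. rewrite exp_0. ring. }
  nra.
Qed.

Lemma gron_low t : 0 <= t -> hh 0 <= hh t * exp (KK * t).
Proof.
  intros Ht.
  assert (H := deriv_nonpos_le (fun x => - (hh x * exp (KK * x)))
     (fun x => - ((Sp x / (1 + SS x) ^ 2 + KK * hh x) * exp (KK * x))) 0 t Ht).
  assert (Hle : - (hh t * exp (KK * t)) <= - (hh 0 * exp (KK * 0))).
  { apply H.
    - intros x _. apply (is_derive_opp (fun x => hh x * exp (KK * x))).
      replace ((Sp x / (1 + SS x) ^ 2 + KK * hh x) * exp (KK * x))
        with ((Sp x / (1 + SS x) ^ 2) * exp (KK * x) + hh x * (exp (KK * x) * KK)) by ring.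
      apply (is_derive_mult hh (fun x => exp (KK * x))).
      + apply hh_deriv.
      + auto_derive; auto. ring.
      + intros; apply Rmult_comm.
    - intros x _. pose proof (hh_bound x). pose proof (Rle_abs (- (Sp x / (1 + SS x) ^ 2))).
      rewrite Rabs_Ropp in H1.
      pose proof (exp_pos (KK * x)). nra. }
  replace (KK * 0) with 0 in Hle by ring. rewrite exp_0 in Hle. lra.
Qed.

Lemma gron_neg t : t <= 0 -> hh 0 <= hh t * exp (- (KK * t)).
Proof.
  intros Ht.
  assert (H := deriv_nonpos_le (fun x => hh x * exp (- (KK * x)))
     (fun x => (Sp x / (1 + SS x) ^ 2 - KK * hh x) * exp (- (KK * x))) t 0 Ht).
  assert (Hle : hh 0 * exp (- (KK * 0)) <= hh t * exp (- (KK * t))).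
  { apply H.
    - intros x _.
      replace ((Sp x / (1 + SS x) ^ 2 - KK * hh x) * exp (- (KK * x)))
        with ((Sp x / (1 + SS x) ^ 2) * exp (- (KK * x)) + hh x * (exp (- (KK * x)) * (- KK))) by ring.
      apply (is_derive_mult hh (fun x => exp (- (KK * x)))).
      + apply hh_deriv.
      + auto_derive; auto. ring.
      + intros; apply Rmult_comm.
    - intros x _. pose proof (hh_bound x). pose proof (Rle_abs (Sp x / (1 + SS x) ^ 2)).
      pose proof (exp_pos (- (KK * x))). nra. }
  replace (- (KK * 0)) with 0 in Hle by ring. rewrite exp_0 in Hle. lra.
Qed.

Lemma SS_pos_all : 0 < SS 0 -> forall t, 0 < SS t.
Proof.
  intros H0 t.
  assert (Hh0 : 0 < hh 0). { unfold hh. apply Rdiv_lt_0_compat; lra. }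
  assert (Hht : 0 < hh t).
  { destruct (Rle_or_lt 0 t).
    - pose proof (gron_low t H). pose proof (exp_pos (KK*t)). nra.
    - pose proof (gron_neg t (Rlt_le _ _ H)). pose proof (exp_pos (- (KK*t))). nra. }
  unfold hh in Hht. pose proof (SS_nonneg t).
  destruct H; [auto|]. rewrite <- H in Hht. unfold Rdiv in Hht. rewrite Rmult_0_l in Hht. lra.
Qed.

Lemma SS_small t : 0 <= t -> SS 0 * exp (KK * t) <= 1/2 -> SS t <= 2 * SS 0 * exp (KK * t).
Proof.
  intros Ht Hsm. pose proof (gron_up t Ht). pose proof (SS_nonneg 0). pose proof (SS_nonneg t).
  pose proof (exp_pos (KK * t)).
  assert (hh 0 <= SS 0). { unfold hh. apply (Rmult_le_reg_r (1 + SS 0)); [lra|].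
    field_simplify; nra. }
  assert (hh t <= 1/2) by nra.
  unfold hh in *.
  assert (SS t <= 1). { apply (Rmult_le_compat_r (1 + SS t)) in H4; [|lra].
    field_simplify in H4; lra. }
  assert (SS t <= (1 + SS t) * (SS 0 * exp (KK * t))).
  { assert (SS t / (1 + SS t) <= SS 0 * exp (KK * t)) by nra.
    apply (Rmult_le_compat_r (1 + SS t)) in H6; [|lra]. field_simplify in H6; lra. }
  nra.
Qed.
End Gr.

Lemma F_der (u v th : R -> R) u0 v0 t u' v' th' :
  is_derive u t u' -> is_derive v t v' -> is_derive th t th' ->
  u t ^ 2 + v t ^ 2 <> 0 -> th' * (u t ^ 2 + v t ^ 2) = u t * v' - v t * u' ->
  is_derive (fun s => ((u0 * cos (th s) - v0 * sin (th s)) * v s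
                      - (u0 * sin (th s) + v0 * cos (th s)) * u s) ^ 2 / (u s ^ 2 + v s ^ 2)) t 0.
Proof.
  intros Hu Hv Hth Hr Hid.
  auto_derive.
  - repeat split; try (eexists; eassumption). exact Hr.
  - replace (Derive (fun x => u x) t) with u' by (symmetry; now apply is_derive_unique).
    replace (Derive (fun x => v x) t) with v' by (symmetry; now apply is_derive_unique).
    replace (Derive (fun x => th x) t) with th' by (symmetry; now apply is_derive_unique).
    replace th' with ((u t * v' - v t * u') / (u t ^ 2 + v t ^ 2)).
    2:{ rewrite <- Hid. field. replace (u t * u t + v t * v t) with (u t ^ 2 + v t ^ 2) by ring. exact Hr. }
    field. replace (u t * u t + v t * v t) with (u t ^ 2 + v t ^ 2) by ring. exact Hr.
Qed.


Section Angle.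
Variables (d : nat) (gamma : R) (Y1 Y2 : R -> R) (kap eps : R).
Hypothesis Hs : is_solution (EP1 d) (EP2 gamma) Y1 Y2.
Hypothesis Hk : kap <> 0.
Hypothesis Hke : kap * (2 * (1 - gamma) + INR d) = 3 * eps.

Definition uu t := kap * Y2 t.
Definition vv t := kap * Y1 t + (kap * (1 - gamma) - eps) * Y2 t ^ 2.
Definition rr t := uu t ^ 2 + vv t ^ 2.
Definition qq t := Y2 t ^ 4 / rr t.
Definition DD := kap ^ 2 * INR d * (1 - gamma) - eps ^ 2.
Definition QQ t := RInt qq 0 t.
Definition th t := t + DD * QQ t.

Hypothesis Hrr : forall t, 0 < rr t.

Lemma uu_der t : is_derive uu t (kap * EP2 gamma (Y1 t) (Y2 t)).
Proof. destruct (Hs t) as [H1 H2]. unfold uu. auto_derive.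
  - eexists; eassumption.
  - replace (Derive (fun x => Y2 x) t) with (EP2 gamma (Y1 t) (Y2 t))
      by (symmetry; now apply is_derive_unique). ring. Qed.

Lemma vv_der t : is_derive vv t (kap * EP1 d (Y1 t) (Y2 t)
   + 2 * (kap * (1 - gamma) - eps) * Y2 t * EP2 gamma (Y1 t) (Y2 t)).
Proof. destruct (Hs t) as [H1 H2]. unfold vv. auto_derive.
  - repeat split; eexists; eassumption.
  - replace (Derive (fun x => Y2 x) t) with (EP2 gamma (Y1 t) (Y2 t))
      by (symmetry; now apply is_derive_unique).
    replace (Derive (fun x => Y1 x) t) with (EP1 d (Y1 t) (Y2 t))
      by (symmetry; now apply is_derive_unique). ring. Qed.

Lemma qq_cont t : continuous qq t.
Proof.
  apply (ex_derive_continuous (K:=R_AbsRing) (V:=R_NormedModule)).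
  destruct (Hs t) as [H1 H2]. pose proof (Hrr t). unfold qq, rr, uu, vv in *. auto_derive.
  repeat split; try (eexists; eassumption). lra.
Qed.

Lemma QQ_der t : is_derive QQ t (qq t).
Proof.
  apply (is_derive_RInt qq QQ 0). 2: apply qq_cont.
  apply filter_forall. intros b. unfold QQ. apply (RInt_correct (V:=R_CompleteNormedModule)). apply (ex_RInt_continuous (V:=R_CompleteNormedModule)).
  intros; apply qq_cont.
Qed.

Lemma th_der t : is_derive th t (1 + DD * qq t).
Proof.
  pose proof (QQ_der t). unfold th. auto_derive.
  - eexists; eassumption.
  - replace (Derive (fun x => QQ x) t) with (qq t) by (symmetry; now apply is_derive_unique). ring.
Qed.

Lemma key_id t : (1 + DD * qq t) * rr t =
  uu t * (kap * EP1 d (Y1 t) (Y2 t)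
   + 2 * (kap * (1 - gamma) - eps) * Y2 t * EP2 gamma (Y1 t) (Y2 t))
  - vv t * (kap * EP2 gamma (Y1 t) (Y2 t)).
Proof.
  pose proof (Hrr t). unfold qq.
  replace ((1 + DD * (Y2 t ^ 4 / rr t)) * rr t) with (rr t + DD * Y2 t ^ 4) by (field; lra).
  unfold rr, uu, vv, DD, EP1. rewrite EP2_eq.
  replace (INR d) with (3 * eps / kap - 2 * (1 - gamma)).
  2:{ apply (Rmult_eq_reg_l kap); auto. field_simplify; auto. lra. }
  field. auto.
Qed.

Lemma angle_main T : 0 < T -> Y1 T = Y1 0 -> Y2 T = Y2 0 ->
  exists n : Z, T + DD * QQ T = IZR n * PI.
Proof.
  intros HT H1 H2.
  set (u0 := uu 0). set (v0 := vv 0).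
  set (F := fun s => ((u0 * cos (th s) - v0 * sin (th s)) * vv s
                      - (u0 * sin (th s) + v0 * cos (th s)) * uu s) ^ 2 / (uu s ^ 2 + vv s ^ 2)).
  assert (HF : forall t, is_derive F t 0).
  { intros t. apply F_der with (u' := kap * EP2 gamma (Y1 t) (Y2 t))
      (v' := kap * EP1 d (Y1 t) (Y2 t) + 2 * (kap * (1 - gamma) - eps) * Y2 t * EP2 gamma (Y1 t) (Y2 t))
      (th' := 1 + DD * qq t).
    - apply uu_der.
    - apply vv_der.
    - apply th_der.
    - pose proof (Hrr t). unfold rr in H. lra.
    - apply key_id. }
  assert (HFT : F T = F 0) by (apply deriv_zero_eq; [lra | intros; apply HF]).
  assert (Hth0 : th 0 = 0).
  { unfold th, QQ. rewrite RInt_point. unfold zero; simpl. ring. }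
  assert (HF0 : F 0 = 0).
  { unfold F. rewrite Hth0, cos_0, sin_0. fold u0 v0. unfold Rdiv. ring. }
  assert (HuT : uu T = u0) by (unfold u0, uu; rewrite H2; reflexivity).
  assert (HvT : vv T = v0) by (unfold v0, vv; rewrite H1, H2; reflexivity).
  assert (Hr0 : 0 < u0 ^ 2 + v0 ^ 2) by (apply Hrr).
  rewrite HF0 in HFT. unfold F in HFT. rewrite HuT, HvT in HFT.
  assert (Hb : ((u0 * cos (th T) - v0 * sin (th T)) * v0 - (u0 * sin (th T) + v0 * cos (th T)) * u0) ^ 2 = 0).
  { apply (Rmult_eq_reg_r (/ (u0 ^ 2 + v0 ^ 2))). rewrite Rmult_0_l. exact HFT.
    apply Rgt_not_eq, Rinv_0_lt_compat; lra. }
  replace ((u0 * cos (th T) - v0 * sin (th T)) * v0 - (u0 * sin (th T) + v0 * cos (th T)) * u0)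
    with (- (sin (th T) * (u0 ^ 2 + v0 ^ 2))) in Hb by ring.
  assert (Hs0 : sin (th T) = 0).
  { assert (Hz : sin (th T) * (u0 ^ 2 + v0 ^ 2) = 0) by nra.
    apply Rmult_integral in Hz; destruct Hz; [assumption | lra]. }
  destruct (sin_eq_0_0 _ Hs0) as [n Hn]. exists n. exact Hn.
Qed.
End Angle.

Lemma exp_le x y : x <= y -> exp x <= exp y.
Proof. intros H. destruct (Rle_lt_or_eq_dec _ _ H). apply Rlt_le, exp_increasing; auto. subst; lra. Qed.

Lemma KK_nonneg d gamma : 0 <= KK d gamma.
Proof. unfold KK. pose proof (pos_INR d). pose proof (Rabs_pos (1 - gamma)). lra. Qed.

Section Orbit.
Variables (d : nat) (gamma : R) (Y1 Y2 : R -> R) (kap eps : R).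
Hypothesis Hs : is_solution (EP1 d) (EP2 gamma) Y1 Y2.
Hypothesis Hk : kap <> 0.
Hypothesis Hke : kap * (2 * (1 - gamma) + INR d) = 3 * eps.
Hypothesis HS0 : 0 < SS Y1 Y2 0.

Lemma rr_pos t : 0 < rr gamma Y1 Y2 kap eps t.
Proof.
  pose proof (SS_pos_all d gamma Y1 Y2 Hs HS0 t) as H. unfold SS in H.
  unfold rr, uu, vv.
  destruct (Req_dec (Y2 t) 0) as [H2|H2].
  - rewrite H2 in *. assert (Y1 t <> 0) by (intro E; rewrite E in H; lra).
    assert (0 < kap * Y1 t * (kap * Y1 t)).
    { assert (kap * Y1 t <> 0) by (apply Rmult_integral_contrapositive; auto). nra. }
    nra.
  - assert (0 < kap * Y2 t * (kap * Y2 t)).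
    { assert (kap * Y2 t <> 0) by (apply Rmult_integral_contrapositive; auto). nra. }
    apply Rplus_lt_le_0_compat; [simpl; nra | apply pow2_ge_0].
Qed.

Lemma qq_nonneg t : 0 <= qq gamma Y1 Y2 kap eps t.
Proof. unfold qq. pose proof (rr_pos t). apply Rmult_le_pos. nra. apply Rlt_le, Rinv_0_lt_compat; lra. Qed.

Lemma qq_le t : qq gamma Y1 Y2 kap eps t <= Y2 t ^ 2 / kap ^ 2.
Proof.
  pose proof (rr_pos t). unfold qq in *.
  assert (Hk2 : 0 < kap ^ 2) by (apply pow2_gt_0; auto) .
  apply (Rmult_le_reg_r (rr gamma Y1 Y2 kap eps t)); auto.
  unfold Rdiv. rewrite Rmult_assoc, Rinv_l by lra. rewrite Rmult_1_r.
  apply (Rmult_le_reg_r (kap ^ 2)); auto.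
  replace (Y2 t ^ 2 * / kap ^ 2 * rr gamma Y1 Y2 kap eps t * kap ^ 2)
    with (Y2 t ^ 2 * rr gamma Y1 Y2 kap eps t) by (field; auto).
  unfold rr, uu, vv. pose proof (pow2_ge_0 (Y2 t)).
  pose proof (pow2_ge_0 (kap * Y1 t + (kap * (1 - gamma) - eps) * Y2 t ^ 2)). nra.
Qed.

Variable T : R.
Hypothesis HT : 0 < T.
Hypothesis HP1 : Y1 T = Y1 0.
Hypothesis HP2 : Y2 T = Y2 0.

Lemma ex_RInt_qq a b : ex_RInt (qq gamma Y1 Y2 kap eps) a b.
Proof. apply (ex_RInt_continuous (V:=R_CompleteNormedModule)). intros. apply (qq_cont d gamma Y1 Y2 kap eps Hs rr_pos). Qed.

Lemma orbit_angle : exists n : Z, T + DD d gamma kap eps * QQ gamma Y1 Y2 kap eps T = IZR n * PI.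
Proof. apply (angle_main d gamma Y1 Y2 kap eps Hs Hk Hke rr_pos T HT HP1 HP2). Qed.

Lemma orbit_nonneg : 0 <= QQ gamma Y1 Y2 kap eps T.
Proof. apply RInt_ge_0. lra. apply ex_RInt_qq. intros; apply qq_nonneg. Qed.

Lemma orbit_upper : SS Y1 Y2 0 * exp (KK d gamma * T) <= 1/2 ->
  QQ gamma Y1 Y2 kap eps T <= T * (2 * SS Y1 Y2 0 * exp (KK d gamma * T) / kap ^ 2).
Proof.
  intros Hsm.
  assert (Hk2 : 0 < kap ^ 2) by (apply pow2_gt_0; auto).
  unfold QQ.
  eapply Rle_trans.
  apply (RInt_le _ (fun _ => 2 * SS Y1 Y2 0 * exp (KK d gamma * T) / kap ^ 2)).
  - lra.
  - apply ex_RInt_qq.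
  - apply ex_RInt_const.
  - intros x Hx. eapply Rle_trans. apply qq_le.
    assert (Hx2 : SS Y1 Y2 0 * exp (KK d gamma * x) <= 1 / 2).
    { eapply Rle_trans; [|exact Hsm]. apply Rmult_le_compat_l. lra. apply exp_le.
      pose proof (KK_nonneg d gamma). nra. }
    pose proof (SS_small d gamma Y1 Y2 Hs x ltac:(lra) Hx2).
    assert (exp (KK d gamma * x) <= exp (KK d gamma * T)).
    { apply exp_le. pose proof (KK_nonneg d gamma). nra. }
    unfold Rdiv. apply Rmult_le_compat_r. apply Rlt_le, Rinv_0_lt_compat; auto.
    unfold SS in *. pose proof (pow2_ge_0 (Y1 x)). nra.
  - rewrite RInt_const. unfold scal; simpl. unfold mult; simpl. lra.
Qed.

Lemma orbit_pos : Y2 0 <> 0 -> 0 < QQ gamma Y1 Y2 kap eps T.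
Proof.
  intros H0.
  set (q0 := qq gamma Y1 Y2 kap eps 0).
  assert (Hq0 : 0 < q0).
  { unfold q0, qq. pose proof (rr_pos 0). apply Rdiv_lt_0_compat; auto.
    assert (0 < Y2 0 ^ 2) by (apply pow2_gt_0; auto). nra. }
  pose proof (qq_cont d gamma Y1 Y2 kap eps Hs rr_pos 0) as Hc.
  apply continuity_pt_filterlim in Hc.
  destruct (Hc (q0 / 2) ltac:(lra)) as [alp [Halp Hal]].
  set (eta := Rmin (alp / 2) T).
  assert (Heta : 0 < eta) by (unfold eta; apply Rmin_glb_lt; lra).
  assert (HetaT : eta <= T) by (unfold eta; apply Rmin_r).
  assert (Hetaa : eta < alp) by (unfold eta; eapply Rle_lt_trans; [apply Rmin_l|lra]).
  unfold QQ.
  rewrite <- (RInt_Chasles _ 0 eta T) by apply ex_RInt_qq.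
  unfold plus; simpl.
  assert (H1 : eta * (q0 / 2) <= RInt (qq gamma Y1 Y2 kap eps) 0 eta).
  { replace (eta * (q0 / 2)) with (RInt (fun _ => q0 / 2) 0 eta).
    2:{ rewrite RInt_const. unfold scal; simpl; unfold mult; simpl. ring. }
    apply RInt_le. lra. apply ex_RInt_const. apply ex_RInt_qq.
    intros x Hx.
    destruct (Req_dec x 0) as [E|E]. { subst x. lra. }
    specialize (Hal x). unfold R_dist, dist in Hal. simpl in Hal.
    assert (Habs : Rabs (qq gamma Y1 Y2 kap eps x - q0) < q0 / 2).
    { apply Hal. split. split. exact I. auto. unfold R_dist. replace (x - 0) with x by ring. rewrite Rabs_pos_eq; lra. }
    apply Rabs_def2 in Habs. lra. }
  assert (H2 : 0 <= RInt (qq gamma Y1 Y2 kap eps) eta T).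
  { apply RInt_ge_0. lra. apply ex_RInt_qq. intros; apply qq_nonneg. }
  nra.
Qed.
End Orbit.

Lemma Zint_small (m : Z) : Rabs (IZR m) < 1 -> m = 0%Z.
Proof.
  intros H. apply Rabs_def2 in H. destruct H as [H1 H2].
  assert (H3 : (-1 < m)%Z) by (apply lt_IZR; simpl; lra).
  assert (H4 : (m < 1)%Z) by (apply lt_IZR; simpl; lra). lia.
Qed.

Lemma noniso (d : nat) (gamma : R) :
  is_isochronous_center (EP1 d) (EP2 gamma) ->
  (2 * (1 - gamma) + INR d) ^ 2 = 9 * INR d * (1 - gamma).
Proof.
  intros [_ [_ [delta [Hdel [T Hiso]]]]].
  destruct (Req_dec ((2 * (1 - gamma) + INR d) ^ 2) (9 * INR d * (1 - gamma))) as [E|Hne];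
    [exact E | exfalso].
  assert (Hkap : exists kap eps, kap <> 0 /\ kap * (2 * (1 - gamma) + INR d) = 3 * eps
                   /\ DD d gamma kap eps <> 0).
  { destruct (Req_dec (2 * (1 - gamma) + INR d) 0) as [Ha|Ha].
    - exists 1, 0. split; [lra|split]. rewrite Ha; ring.
      unfold DD. intro H0. apply Hne. rewrite Ha. lra.
    - exists (3 / (2 * (1 - gamma) + INR d)), 1. split.
      { unfold Rdiv. apply Rmult_integral_contrapositive. split; [lra|]. apply Rinv_neq_0_compat; auto. }
      split. { field. auto. }
      unfold DD. intro H0. apply Hne.
      assert (H1 : 9 * INR d * (1 - gamma) / (2 * (1 - gamma) + INR d) ^ 2 = 1).
      { replace (9 * INR d * (1 - gamma) / (2 * (1 - gamma) + INR d) ^ 2)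
          with ((3 / (2 * (1 - gamma) + INR d)) ^ 2 * INR d * (1 - gamma) - 1 ^ 2 + 1) by (field; auto).
        rewrite H0. ring. }
      apply (Rmult_eq_reg_r (/ (2 * (1 - gamma) + INR d) ^ 2)).
      2:{ apply Rinv_neq_0_compat. apply pow_nonzero. auto. }
      rewrite Rinv_r by (apply pow_nonzero; auto). symmetry. exact H1. }
  destruct Hkap as [kap [eps [Hk [Hke HD]]]].
  set (E := exp (KK d gamma * T)).
  assert (Horb : forall r, 0 < r -> r < delta ^ 2 ->
     exists J, (exists n : Z, T + DD d gamma kap eps * J = IZR n * PI) /\ 0 < J /\ 0 < T /\
        (r * E <= 1/2 -> J <= T * (2 * r * E / kap ^ 2))).
  { intros r Hr Hrd.
    destruct (Hiso 0 (sqrt r)) as [Y1 [Y2 [Hs [H01 [H02 [HT0 [Hper Hmin]]]]]]].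
    { rewrite pow2_sqrt by lra. simpl. lra. }
    assert (HS : SS Y1 Y2 0 = r). { unfold SS. rewrite H01, H02, pow2_sqrt by lra. simpl. ring. }
    assert (HP1 : Y1 T = Y1 0) by (destruct (Hper 0) as [A _]; rewrite Rplus_0_l in A; exact A).
    assert (HP2 : Y2 T = Y2 0) by (destruct (Hper 0) as [_ A]; rewrite Rplus_0_l in A; exact A).
    assert (HS0 : 0 < SS Y1 Y2 0) by lra.
    exists (QQ gamma Y1 Y2 kap eps T). split; [|split; [|split]].
    - apply (orbit_angle d gamma Y1 Y2 kap eps Hs Hk Hke HS0 T HT0 HP1 HP2).
    - apply (orbit_pos d gamma Y1 Y2 kap eps Hs Hk HS0 T HT0).
      rewrite H02. apply Rgt_not_eq, sqrt_lt_R0. lra.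
    - exact HT0.
    - intros Hsm. rewrite <- HS. apply (orbit_upper d gamma Y1 Y2 kap eps Hs Hk HS0 T HT0).
      rewrite HS. exact Hsm. }
  assert (Hd2 : 0 < delta ^ 2) by (apply pow2_gt_0; lra).
  destruct (Horb (delta ^ 2 / 2) ltac:(lra) ltac:(lra)) as [J0 [_ [_ [HT _]]]].
  assert (HE : 0 < E) by apply exp_pos.
  assert (Hk2 : 0 < kap ^ 2) by (apply pow2_gt_0; auto).
  set (C := T * (2 * E / kap ^ 2)).
  assert (HC : 0 < C). { unfold C. apply Rmult_lt_0_compat; auto. apply Rdiv_lt_0_compat; lra. }
  set (A := Rabs (DD d gamma kap eps)).
  assert (HA : 0 < A) by (apply Rabs_pos_lt; auto).
  set (r1 := Rmin (delta ^ 2 / 2) (Rmin (1 / (2 * E)) (PI / (4 * (A * C + 1))))).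
  assert (HPI := PI_RGT_0).
  assert (Hr1 : 0 < r1).
  { unfold r1. apply Rmin_glb_lt; [lra|]. apply Rmin_glb_lt; apply Rdiv_lt_0_compat; nra. }
  assert (Hr1a : r1 <= delta ^ 2 / 2) by apply Rmin_l.
  assert (Hr1b : r1 <= 1 / (2 * E)) by (eapply Rle_trans; [apply Rmin_r|apply Rmin_l]).
  assert (Hr1c : r1 <= PI / (4 * (A * C + 1))) by (eapply Rle_trans; [apply Rmin_r|apply Rmin_r]).
  destruct (Horb r1 Hr1 ltac:(lra)) as [J1 [[n1 Hn1] [HJ1 [_ HJ1u]]]].
  assert (HJ1' : J1 <= C * r1).
  { eapply Rle_trans. apply HJ1u.
    { apply (Rmult_le_reg_r (/ E)). apply Rinv_0_lt_compat; auto.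
      replace (r1 * E * / E) with r1 by (field; lra). replace (1 / 2 * / E) with (1 / (2 * E)) by (field; lra). lra. }
    unfold C. right. field. lra. }
  set (r2 := Rmin (delta ^ 2 / 2) (Rmin (1 / (2 * E)) (J1 / (2 * C)))).
  assert (Hr2 : 0 < r2).
  { unfold r2. apply Rmin_glb_lt; [lra|]. apply Rmin_glb_lt; apply Rdiv_lt_0_compat; nra. }
  assert (Hr2a : r2 <= delta ^ 2 / 2) by apply Rmin_l.
  assert (Hr2b : r2 <= 1 / (2 * E)) by (eapply Rle_trans; [apply Rmin_r|apply Rmin_l]).
  assert (Hr2c : r2 <= J1 / (2 * C)) by (eapply Rle_trans; [apply Rmin_r|apply Rmin_r]).
  destruct (Horb r2 Hr2 ltac:(lra)) as [J2 [[n2 Hn2] [HJ2 [_ HJ2u]]]].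
  assert (HJ2' : J2 <= C * r2).
  { eapply Rle_trans. apply HJ2u.
    { apply (Rmult_le_reg_r (/ E)). apply Rinv_0_lt_compat; auto.
      replace (r2 * E * / E) with r2 by (field; lra). replace (1 / 2 * / E) with (1 / (2 * E)) by (field; lra). lra. }
    unfold C. right. field. lra. }
  assert (HJ12 : J2 < J1).
  { assert (C * r2 <= J1 / 2).
    { apply (Rmult_le_compat_l C) in Hr2c; [|lra]. replace (C * (J1 / (2 * C))) with (J1 / 2) in Hr2c by (field; lra). lra. }
    lra. }
  assert (Hdiff : DD d gamma kap eps * (J1 - J2) = IZR (n1 - n2) * PI).
  { rewrite minus_IZR. lra. }
  assert (HAC0 : 0 < A * C) by (apply Rmult_lt_0_compat; lra).
  assert (HAC : A * C * r1 < PI).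
  { assert (A * C * r1 <= A * C * (PI / (4 * (A * C + 1)))).
    { apply Rmult_le_compat_l; [lra|auto]. }
    assert (A * C * (PI / (4 * (A * C + 1))) < PI).
    { apply (Rmult_lt_reg_r (4 * (A * C + 1))). lra.
      replace (A * C * (PI / (4 * (A * C + 1))) * (4 * (A * C + 1))) with (A * C * PI) by (field; lra).
      assert (0 <= A * C * PI) by (apply Rmult_le_pos; lra).
      replace (PI * (4 * (A * C + 1))) with (4 * (A * C * PI) + 4 * PI) by ring. lra. }
    lra. }
  assert (Hbound : Rabs (DD d gamma kap eps * (J1 - J2)) < PI).
  { rewrite Rabs_mult. fold A. rewrite Rabs_pos_eq by lra. nra. }
  rewrite Hdiff, Rabs_mult, (Rabs_pos_eq PI) in Hbound by lra.
  assert (Hm : Rabs (IZR (n1 - n2)) < 1).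
  { apply (Rmult_lt_reg_r PI); lra. }
  apply Zint_small in Hm. rewrite Hm in Hdiff. simpl in Hdiff.
  rewrite Rmult_0_l in Hdiff. apply Rmult_integral in Hdiff. destruct Hdiff; [auto|lra].
Qed.

Lemma EP2_eq_ gamma y1 y2 : EP2 gamma y1 y2 = - y1 - (1 - gamma) * y2 ^ 2.
Proof. unfold EP2. ring. Qed.

Lemma rot_fix (B C s : R) : B * (cos s - 1) + C * sin s = 0 -> - B * sin s + C * (cos s - 1) = 0 ->
  0 < B ^ 2 + C ^ 2 -> 0 < s < 2 * PI -> False.
Proof.
  intros H1 H2 HBC Hs.
  assert (Hsum : (B ^ 2 + C ^ 2) * ((cos s - 1) ^ 2 + sin s ^ 2) = 0).
  { replace ((B ^ 2 + C ^ 2) * ((cos s - 1) ^ 2 + sin s ^ 2))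
      with ((B * (cos s - 1) + C * sin s) ^ 2 + (- B * sin s + C * (cos s - 1)) ^ 2) by ring.
    rewrite H1, H2. ring. }
  apply Rmult_integral in Hsum. destruct Hsum as [Hs0|Hs0]; [lra|].
  pose proof (pow2_ge_0 (cos s - 1)). pose proof (pow2_ge_0 (sin s)).
  assert (Hsin : sin s = 0).
  { apply Rsqr_0_uniq. unfold Rsqr. assert (sin s ^ 2 = 0) by lra. simpl in *. lra. }
  assert (Hcos : cos s = 1).
  { assert (cos s - 1 = 0). { apply Rsqr_0_uniq. unfold Rsqr. assert ((cos s - 1) ^ 2 = 0) by lra. simpl in *. lra. } lra. }
  destruct (sin_eq_0_0 s Hsin) as [n Hn].
  assert (HPI := PI_RGT_0).
  assert (Hn1 : (0 < n)%Z). { apply lt_IZR. simpl. subst s. nra. }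
  assert (Hn2 : (n < 2)%Z). { apply lt_IZR. simpl. subst s. nra. }
  assert (n = 1%Z) by lia. subst n. simpl in Hn. rewrite Rmult_1_l in Hn. subst s.
  rewrite cos_PI in Hcos. lra.
Qed.

Lemma cos_p t : cos (t + 2 * PI) = cos t.
Proof. rewrite cos_plus, cos_2PI, sin_2PI. ring. Qed.
Lemma sin_p t : sin (t + 2 * PI) = sin t.
Proof. rewrite sin_plus, cos_2PI, sin_2PI. ring. Qed.

Lemma iso_linear (d : nat) (gamma : R) : INR d = 0 -> gamma = 1 ->
  is_isochronous_center (EP1 d) (EP2 gamma).
Proof.
  intros Hd Hg. subst gamma.
  split; [unfold EP1; ring|]. split; [unfold EP2; ring|].
  exists 1. split; [lra|]. exists (2 * PI).
  intros p1 p2 Hp.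
  exists (fun t => p1 * cos t + p2 * sin t), (fun t => p2 * cos t - p1 * sin t).
  split; [|split; [|split]].
  - intros t. unfold EP1, EP2. rewrite Hd. split; auto_derive; auto; ring.
  - simpl. rewrite cos_0, sin_0. ring.
  - simpl. rewrite cos_0, sin_0. ring.
  - split; [pose proof PI_RGT_0; lra|]. split.
    + intros t. rewrite cos_p, sin_p. split; reflexivity.
    + intros s Hs. exists 0. rewrite Rplus_0_l, cos_0, sin_0.
      destruct (Req_dec (p1 * cos s + p2 * sin s) (p1 * 1 + p2 * 0)) as [E1|E1]; [|left; auto].
      destruct (Req_dec (p2 * cos s - p1 * sin s) (p2 * 1 - p1 * 0)) as [E2|E2]; [|right; auto].
      exfalso. apply (rot_fix p1 p2 s); try lra.
Qed.
Definition wB B C t := 1 + B * cos t + C * sin t.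
Definition w1 B C t := - B * sin t + C * cos t.
Definition w2 B C t := - B * cos t - C * sin t.
Definition Ys2 k B C t := k * (w1 B C t / wB B C t).
Definition Ys1 k c B C t := - (k * (w2 B C t / wB B C t - (w1 B C t / wB B C t) ^ 2))
   - c * (k * (w1 B C t / wB B C t)) ^ 2.

Lemma expl_der2 k c B C t : wB B C t <> 0 ->
  is_derive (Ys2 k B C) t (- Ys1 k c B C t - c * Ys2 k B C t ^ 2).
Proof.
  intros Hw. unfold Ys2, Ys1, w1, w2. unfold wB in *. auto_derive. auto. field. auto.
Qed.

Lemma expl_der1 k c dd B C t : k <> 0 -> (c = / k \/ c = / (2 * k)) -> dd = 3 / k - 2 * c ->
  wB B C t <> 0 ->
  is_derive (Ys1 k c B C) t (Ys2 k B C t - dd * Ys1 k c B C t * Ys2 k B C t).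
Proof.
  intros Hk Hc Hd Hw. subst dd. unfold Ys2, Ys1, w1, w2. unfold wB in *. auto_derive. auto.
  destruct Hc; subst c; field; auto.
Qed.

Lemma beta_bound (k lam p1 p2 delta : R) : 0 < k -> 0 < delta -> delta <= 1 ->
  64 * (1 + lam ^ 2 / k ^ 4) * delta ^ 2 <= k ^ 2 ->
  p1 ^ 2 < delta ^ 2 -> p2 ^ 2 < delta ^ 2 ->
  ((p1 - lam * (p2 / k) ^ 2) / k) ^ 2 <= 1 / 32 /\ (p2 / k) ^ 2 <= 1 / 64.
Proof.
  intros Hk Hd Hd1 Hdk H1 H2.
  assert (Hk2 : 0 < k ^ 2) by (apply pow2_gt_0; lra).
  assert (Hk4 : 0 < k ^ 4) by (apply pow_lt; lra).
  assert (HL : 0 <= lam ^ 2 / k ^ 4) by (apply Rmult_le_pos; [apply pow2_ge_0| apply Rlt_le, Rinv_0_lt_compat; lra]).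
  split.
  - assert (Hp24 : p2 ^ 4 <= delta ^ 2).
    { assert (p2 ^ 2 <= 1) by nra. pose proof (pow2_ge_0 p2).
      replace (p2 ^ 4) with (p2 ^ 2 * p2 ^ 2) by ring. nra. }
    assert (Hnum : (p1 - lam * (p2 / k) ^ 2) ^ 2 <= 2 * (1 + lam ^ 2 / k ^ 4) * delta ^ 2).
    { assert ((p1 - lam * (p2 / k) ^ 2) ^ 2 <= 2 * p1 ^ 2 + 2 * (lam * (p2 / k) ^ 2) ^ 2).
      { pose proof (pow2_ge_0 (p1 + lam * (p2 / k) ^ 2)). nra. }
      replace ((lam * (p2 / k) ^ 2) ^ 2) with (lam ^ 2 / k ^ 4 * p2 ^ 4) in H by (field; lra).
      assert (lam ^ 2 / k ^ 4 * p2 ^ 4 <= lam ^ 2 / k ^ 4 * delta ^ 2) by (apply Rmult_le_compat_l; auto).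
      nra. }
    replace (((p1 - lam * (p2 / k) ^ 2) / k) ^ 2) with ((p1 - lam * (p2 / k) ^ 2) ^ 2 / k ^ 2) by (field; lra).
    apply (Rmult_le_reg_r (k ^ 2)); auto. unfold Rdiv. rewrite Rmult_assoc, Rinv_l by lra. nra.
  - replace ((p2 / k) ^ 2) with (p2 ^ 2 / k ^ 2) by (field; lra).
    apply (Rmult_le_reg_r (k ^ 2)); auto. unfold Rdiv. rewrite Rmult_assoc, Rinv_l by lra.
    assert (64 * delta ^ 2 <= k ^ 2) by nra. nra.
Qed.

Lemma w_pos B C t : B ^ 2 + C ^ 2 < 1 / 4 -> 1 / 2 < wB B C t.
Proof.
  intros H. unfold wB.
  assert (Hcs := sin2_cos2 t). unfold Rsqr in Hcs.
  assert ((B * cos t + C * sin t) ^ 2 <= B ^ 2 + C ^ 2).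
  { replace (B ^ 2 + C ^ 2) with ((B * cos t + C * sin t) ^ 2 + (B * sin t - C * cos t) ^ 2)
      by (replace (B ^ 2 + C ^ 2) with ((B ^ 2 + C ^ 2) * (sin t * sin t + cos t * cos t)) by (rewrite Hcs; ring); ring).
    pose proof (pow2_ge_0 (B * sin t - C * cos t)). lra. }
  nra.
Qed.

Lemma iso_nonlin (d : nat) (gamma k : R) : 0 < k ->
  (1 - gamma = / k \/ 1 - gamma = / (2 * k)) -> INR d = 3 / k - 2 * (1 - gamma) ->
  is_isochronous_center (EP1 d) (EP2 gamma).
Proof.
  intros Hk Hc Hd.
  set (c := 1 - gamma) in *.
  split; [unfold EP1; ring|]. split; [unfold EP2; ring|].
  set (lam := k - c * k ^ 2).
  set (N := 1 + lam ^ 2 / k ^ 4).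
  assert (Hk4 : 0 < k ^ 4) by (apply pow_lt; lra).
  assert (HN : 1 <= N).
  { unfold N. assert (0 <= lam ^ 2 / k ^ 4) by (apply Rmult_le_pos; [apply pow2_ge_0| apply Rlt_le, Rinv_0_lt_compat; lra]). lra. }
  set (delta := Rmin 1 (k / (8 * N))).
  assert (Hdel : 0 < delta) by (unfold delta; apply Rmin_glb_lt; [lra| apply Rdiv_lt_0_compat; lra]).
  assert (Hdel1 : delta <= 1) by apply Rmin_l.
  assert (Hdel2 : delta <= k / (8 * N)) by apply Rmin_r.
  assert (Hdk : 64 * N * delta ^ 2 <= k ^ 2).
  { assert (8 * N * delta <= k).
    { apply (Rmult_le_compat_l (8 * N)) in Hdel2; [|lra].
      replace (8 * N * (k / (8 * N))) with k in Hdel2 by (field; lra). lra. }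
    assert (Hq : (8 * N * delta) ^ 2 <= k ^ 2).
    { apply pow_incr. split; [|lra]. apply Rmult_le_pos; lra. }
    assert (Hd2 : 0 <= delta ^ 2) by apply pow2_ge_0.
    assert (64 * N * delta ^ 2 <= 64 * N * N * delta ^ 2).
    { replace (64 * N * N * delta ^ 2) with (64 * N * delta ^ 2 * N) by ring.
      rewrite <- (Rmult_1_r (64 * N * delta ^ 2)) at 1. apply Rmult_le_compat_l; [|lra].
      apply Rmult_le_pos; lra. }
    replace ((8 * N * delta) ^ 2) with (64 * N * N * delta ^ 2) in Hq by ring. lra. }
  exists delta. split; auto. exists (2 * PI).
  intros p1 p2 Hp.
  assert (H1 : p1 ^ 2 < delta ^ 2) by (pose proof (pow2_ge_0 p2); lra).
  assert (H2 : p2 ^ 2 < delta ^ 2) by (pose proof (pow2_ge_0 p1); lra).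
  destruct (beta_bound k lam p1 p2 delta Hk Hdel Hdel1 Hdk H1 H2) as [Hb Hg].
  set (g := p2 / k) in *.
  set (beta := (p1 - lam * g ^ 2) / k) in *.
  assert (Hb1 : 3 / 4 <= 1 - beta) by nra.
  set (B := beta / (1 - beta)). set (C := g / (1 - beta)).
  assert (HBC : B ^ 2 + C ^ 2 < 1 / 4).
  { unfold B, C. replace ((beta / (1 - beta)) ^ 2 + (g / (1 - beta)) ^ 2)
      with ((beta ^ 2 + g ^ 2) / (1 - beta) ^ 2) by (field; lra).
    apply (Rmult_lt_reg_r ((1 - beta) ^ 2)). nra.
    unfold Rdiv. rewrite Rmult_assoc, Rinv_l by nra. nra. }
  assert (Hw : forall t, wB B C t <> 0) by (intros t; pose proof (w_pos B C t HBC); lra).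
  exists (Ys1 k c B C), (Ys2 k B C).
  split; [|split; [|split]].
  - intros t. rewrite EP2_eq_. fold c. split.
    + unfold EP1. apply expl_der1; auto. lra.
    + apply expl_der2. auto.
  - unfold Ys1, w1, w2, wB. rewrite cos_0, sin_0. unfold B, C, beta, g, lam.
    field. assert (E : p1 * k ^ 2 - (k - c * k ^ 2) * p2 ^ 2 = k ^ 3 * beta) by (unfold beta, g, lam; field; lra).
    rewrite E. assert (0 < k ^ 3) by (apply pow_lt; lra).
    split; [lra|]. split.
    + replace (k ^ 2 * k - k ^ 3 * beta) with (k ^ 3 * (1 - beta)) by ring. apply Rgt_not_eq. apply Rmult_lt_0_compat; lra.
    + replace (k ^ 2 * k - k ^ 3 * beta + k ^ 3 * beta) with (k ^ 3) by ring. lra.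
  - unfold Ys2, w1, w2, wB. rewrite cos_0, sin_0. unfold B, C, beta, g, lam.
    field. assert (E : p1 * k ^ 2 - (k - c * k ^ 2) * p2 ^ 2 = k ^ 3 * beta) by (unfold beta, g, lam; field; lra).
    rewrite E. assert (0 < k ^ 3) by (apply pow_lt; lra).
    split; [lra|]. split.
    + replace (k ^ 2 * k - k ^ 3 * beta) with (k ^ 3 * (1 - beta)) by ring. apply Rgt_not_eq. apply Rmult_lt_0_compat; lra.
    + replace (k ^ 2 * k - k ^ 3 * beta + k ^ 3 * beta) with (k ^ 3) by ring. lra.
  - split; [pose proof PI_RGT_0; lra|]. split.
    + intros t. unfold Ys1, Ys2, w1, w2, wB. rewrite cos_p, sin_p. split; reflexivity.
    + intros s Hs. exists 0. rewrite Rplus_0_l.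
      destruct (Req_dec (Ys1 k c B C s) (Ys1 k c B C 0)) as [E1|E1]; [|left; auto].
      destruct (Req_dec (Ys2 k B C s) (Ys2 k B C 0)) as [E2|E2]; [|right; auto].
      exfalso.
      assert (HW0 := w_pos B C 0 HBC). assert (HWs := w_pos B C s HBC).
      assert (Er : w1 B C s / wB B C s = w1 B C 0 / wB B C 0).
      { unfold Ys2 in E2. apply Rmult_eq_reg_l in E2; auto. lra. }
      assert (Ea : w2 B C s / wB B C s = w2 B C 0 / wB B C 0).
      { unfold Ys1 in E1. rewrite Er in E1.
        assert (k * (w2 B C s / wB B C s) = k * (w2 B C 0 / wB B C 0)) by lra.
        apply Rmult_eq_reg_l in H; auto. lra. }
      assert (Hw2 : forall t, w2 B C t = 1 - wB B C t) by (intros; unfold w2, wB; ring).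
      rewrite !Hw2 in Ea.
      assert (EW : wB B C s = wB B C 0).
      { assert (/ wB B C s = / wB B C 0).
        { replace (/ wB B C s) with ((1 - wB B C s) / wB B C s + 1) by (field; lra).
          rewrite Ea. field. lra. }
        rewrite <- (Rinv_inv (wB B C s)), <- (Rinv_inv (wB B C 0)). rewrite H. reflexivity. }
      assert (E1' : w1 B C s = w1 B C 0).
      { rewrite EW in Er. apply (Rmult_eq_reg_r (/ wB B C 0)). exact Er.
        apply Rinv_neq_0_compat; lra. }
      unfold wB in EW. unfold w1 in E1'. rewrite cos_0, sin_0 in EW, E1'.
      assert (HBC0 : 0 < B ^ 2 + C ^ 2).
      { destruct (Req_dec B 0) as [HB0|HB0].
        - destruct (Req_dec C 0) as [HC0|HC0].
          + exfalso.
            assert (Hg0 : g = 0).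
            { unfold C in HC0. apply (Rmult_eq_compat_r (1 - beta)) in HC0.
              replace (g / (1 - beta) * (1 - beta)) with g in HC0 by (field; lra). lra. }
            assert (Hb0 : beta = 0).
            { unfold B in HB0. apply (Rmult_eq_compat_r (1 - beta)) in HB0.
              replace (beta / (1 - beta) * (1 - beta)) with beta in HB0 by (field; lra). lra. }
            assert (Hp2 : p2 = k * g) by (unfold g; field; lra).
            assert (Hp1 : p1 = k * beta + lam * g ^ 2) by (unfold beta; field; lra).
            rewrite Hg0 in Hp2. rewrite Hg0, Hb0 in Hp1. 
            assert (p1 = 0) by (rewrite Hp1; ring). assert (p2 = 0) by (rewrite Hp2; ring).
            subst p1 p2. simpl in Hp. lra.
          + pose proof (pow2_ge_0 B). assert (0 < C ^ 2) by (apply pow2_gt_0; auto). lra.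
        - pose proof (pow2_ge_0 C). assert (0 < B ^ 2) by (apply pow2_gt_0; auto). lra. }
      apply (rot_fix B C s); auto; lra.
Qed.

Lemma iso_suff (d : nat) (gamma : R) :
  (2 * (1 - gamma) + INR d) ^ 2 = 9 * INR d * (1 - gamma) ->
  is_isochronous_center (EP1 d) (EP2 gamma).
Proof.
  intros H.
  pose proof (pos_INR d) as Hd0.
  destruct (Req_dec (INR d) 0) as [Hd|Hd].
  - apply iso_linear; auto. rewrite Hd in H.
    assert (Hc : (1 - gamma) ^ 2 = 0) by nra.
    assert (1 - gamma = 0).
    { apply Rsqr_0_uniq. unfold Rsqr. simpl in Hc. lra. }
    lra.
  - assert (Hdp : 0 < INR d) by lra.
    assert (Hc : 0 < 1 - gamma).
    { destruct (Rlt_or_le 0 (1 - gamma)) as [Hc|Hc]; auto. exfalso.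
      assert (9 * INR d * (1 - gamma) <= 0) by nra.
      pose proof (pow2_ge_0 (2 * (1 - gamma) + INR d)).
      assert (Hz : (2 * (1 - gamma) + INR d) ^ 2 = 0) by lra.
      assert (9 * INR d * (1 - gamma) = 0) by lra.
      assert (1 - gamma = 0).
      { apply Rmult_integral in H2. destruct H2; [|auto]. apply Rmult_integral in H2. destruct H2; lra. }
      rewrite H3 in Hz. assert (INR d = 0). { apply Rsqr_0_uniq. unfold Rsqr. simpl in Hz. lra. } lra. }
    set (c := 1 - gamma) in *.
    set (a := 2 * c + INR d).
    assert (Ha : 0 < a) by (unfold a; lra).
    apply (iso_nonlin d gamma (3 / a)).
    + apply Rdiv_lt_0_compat; lra.
    + assert (Hf : (4 * c - INR d) * (c - INR d) = 0) by (unfold a in *; nra).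
      apply Rmult_integral in Hf. destruct Hf as [Hf|Hf].
      * right. fold c. assert (INR d = 4 * c) by lra. unfold a. rewrite H0. field. lra.
      * left. fold c. assert (INR d = c) by lra. unfold a. rewrite H0. field. lra.
    + fold c. unfold a. field. unfold a in Ha. lra.
Qed.

Lemma iso_iff (d : nat) (gamma : R) :
  is_isochronous_center (EP1 d) (EP2 gamma) <->
  (2 * (1 - gamma) + INR d) ^ 2 = 9 * INR d * (1 - gamma).
Proof. split; [apply noniso | apply iso_suff]. Qed.

Lemma cond_iff (d : nat) (gamma : R) :
  (2 * (1 - gamma) + INR d) ^ 2 = 9 * INR d * (1 - gamma) <->
  gamma = 1 - INR d \/ gamma = 1 - INR d / 4.
Proof.
  split.
  - intros H. assert (Hf : (4 * (1 - gamma) - INR d) * ((1 - gamma) - INR d) = 0) by nra.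
    apply Rmult_integral in Hf. destruct Hf; [right | left]; lra.
  - intros [H|H]; rewrite H; field.
Qed.

Theorem mainTheorem4 (d : nat) (gamma : R) :
  (* Y2 satisfies the Lienard equation along every solution on any open interval *)
  (forall (a b : R) (Y1 Y2 : R -> R),
     (forall t : R, a < t < b ->
        is_derive Y1 t (EP1 d (Y1 t) (Y2 t)) /\ is_derive Y2 t (EP2 gamma (Y1 t) (Y2 t))) ->
     forall t : R, a < t < b ->
       ex_derive (Derive Y2) t /\
       Derive (Derive Y2) t + (2 * (1 - gamma) + INR d) * Y2 t * Derive Y2 t
         + Y2 t + INR d * (1 - gamma) * Y2 t ^ 3 = 0)
  /\ (is_isochronous_center (EP1 d) (EP2 gamma) <->
        (2 * (1 - gamma) + INR d) ^ 2 = 9 * INR d * (1 - gamma))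
  /\ ((2 * (1 - gamma) + INR d) ^ 2 = 9 * INR d * (1 - gamma) <->
        gamma = 1 - INR d \/ gamma = 1 - INR d / 4)
  /\ (is_isochronous_center (EP1 d) (EP2 0) <-> (d = 1%nat \/ d = 4%nat)).
Proof.
  split; [intros a b Y1 Y2 H; apply (lienard d gamma a b Y1 Y2 H)|].
  split; [apply iso_iff|].
  split; [apply cond_iff|].
  rewrite iso_iff.
  split.
  - intros H. assert (Hf : (INR d - 1) * (INR d - 4) = 0) by nra.
    apply Rmult_integral in Hf. destruct Hf as [Hf|Hf].
    + left. apply INR_eq. simpl. lra.
    + right. apply INR_eq. replace (INR 4) with 4 by (simpl; ring). lra.
  - intros [H|H]; subst d; simpl; ring.
Qed.
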